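(* Let $\{a_n\}_{n\ge1}$ be the off-diagonal parameters of Example 5.1 (with $b_n=0$), and set $a_0=1$. For $x_0\in(-1,1)$ and $\theta_0\in\mathbb{R}$ let $u_n=u_n(x_0,\theta_0)$, $n\ge0$, be the solution of $a_nu_{n+1}-x_0u_n+a_{n-1}u_{n-1}=0$ ($n\ge1$) with $u_0=\cos\theta_0$, $u_1=\sin\theta_0$. Then for every compact $K\subset(-1,1)$ there is $C<\infty$ such that $|u_n(x_0,\theta_0)|\le C$ for all $x_0\in K$, all $\theta_0\in\mathbb{R}$ and all $n\ge0$.
   Context: Example 5.1: partition $\{1,2,\dots\}$ into successive consecutive blocks $A_1,B_1,C_1,D_1,A_2,B_2,\dots$ with $\#A_j=3^{j^2}$, $\#C_j=2^{j^2}$, $\#B_j=\#D_j=j^6-1$. $a_n=1$ for $n\in A_j$, $a_n=\tfrac12$ for $n\in C_j$; if $s$ is the last index of $A_j$ then $a_{s+i}=2^{-i/j^6}$ for $1\le i\le j^6-1$ (indices of $B_j$), and if $t$ is the last index of $C_j$ then $a_{t+i}=2^{-1+i/j^6}$ for $1\le i\le j^6-1$ (indices of $D_j$). *)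

(* Defs.v *)
From Stdlib Require Import Reals Arith.
Open Scope R_scope.

Definition sizeA (j : nat) : nat := 3 ^ (j * j).
Definition sizeB (j : nat) : nat := j ^ 6 - 1.
Definition sizeC (j : nat) : nat := 2 ^ (j * j).
Definition sizeD (j : nat) : nat := j ^ 6 - 1.
Definition blockLen (j : nat) : nat := sizeA j + sizeB j + sizeC j + sizeD j.

(* a_aux fuel j m : value of the parameter at 0-based offset m counted from
   the first index of A_j (blocks A_j,B_j,C_j,D_j,A_{j+1},...).
   The fuel is always sufficient when fuel > m since every group is
   nonempty. *)
Fixpoint a_aux (fuel j m : nat) : R :=
  match fuel with
  | O => 1
  | S f =>
    if Nat.ltb m (sizeA j) then 1
    else let m1 := (m - sizeA j)%nat in
    if Nat.ltb m1 (sizeB j) then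
      (* index s+i with i = m1+1 : a = 2^{-i/j^6} *)
      Rpower 2 (- (INR (S m1) / INR (j ^ 6)))
    else let m2 := (m1 - sizeB j)%nat in
    if Nat.ltb m2 (sizeC j) then 1 / 2
    else let m3 := (m2 - sizeC j)%nat in
    if Nat.ltb m3 (sizeD j) then
      (* index t+i with i = m3+1 : a = 2^{-1+i/j^6} *)
      Rpower 2 (-1 + INR (S m3) / INR (j ^ 6))
    else a_aux f (S j) (m3 - sizeD j)
  end.

Definition a_ex (n : nat) : R :=
  match n with
  | O => 1
  | S k => a_aux n 1 k
  end.

(* Main.v *)
Require Import Defs.
From Stdlib Require Import Reals Lra Lia List.
Open Scope R_scope.

Definition Qf (al x p q : R) := p*p - x*p*q + al*q*q.
Definition dd (al x : R) := al - x*x/4.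
Definition Vf al x p q := Qf al x p q * Qf al x p q / dd al x.
Definition Tf al x p q := q*(x*p/2 - al*q).
Definition Rf al x p q := Qf al x p q * Tf al x p q / (dd al x * dd al x).
Definition Ef al be x P q := (q*q - Qf al x P q / dd al x)^2 / dd be x.
Definition Gf al be x P q :=
  - Qf al x P q * Tf al x P q * (dd al x + dd be x) / ((dd al x)^2 * (dd be x)^2)
  + (q*q*(Tf al x P q - Qf al x P q) - (be-al)*q^4) / (dd be x)^2.

Lemma Q_inv a x p q : a <> 0 ->
  Qf (a*a) x (x*(p/a) - a*q) (p/a) = Qf (a*a) x p q.
Proof. intros; unfold Qf; field; auto. Qed.

Lemma V_step a be x p q : a <> 0 -> dd (a*a) x <> 0 -> dd be x <> 0 ->
  let P := x*(p/a) - a*q in let q' := p/a in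
  Vf be x P q' - Vf (a*a) x p q =
  (be - a*a)*(Rf (a*a) x p q - Rf (a*a) x P q') + (be-a*a)^2 * Ef (a*a) be x P q'.
Proof. intros H1 H2 H3 P q'. unfold P, q', Vf, Rf, Ef, Qf, Tf in *. unfold dd in *. field; repeat split; auto; intro; lra. Qed.

Lemma R_step al be x P q : dd al x <> 0 -> dd be x <> 0 ->
  Rf be x P q - Rf al x P q = (be - al) * Gf al be x P q.
Proof. intros. unfold Gf, Rf, Qf, Tf in *. unfold dd in *. field; repeat split; auto; intro; lra. Qed.

Lemma abs_mul_le X Y A B : Rabs X <= A -> Rabs Y <= B -> Rabs (X*Y) <= A*B.
Proof. intros. rewrite Rabs_mult. apply Rmult_le_compat; auto using Rabs_pos. Qed.

Lemma abs_sum_le X Y A B : Rabs X <= A -> Rabs Y <= B -> Rabs (X+Y) <= A+B.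
Proof. intros. eapply Rle_trans. apply Rabs_triang. lra. Qed.

Lemma abs_sub_le X Y A B : Rabs X <= A -> Rabs Y <= B -> Rabs (X-Y) <= A+B.
Proof. intros. unfold Rminus. eapply Rle_trans. apply Rabs_triang. rewrite Rabs_Ropp. lra. Qed.

Lemma abs_bnd X B : Rabs X <= B -> -B <= X <= B.
Proof. unfold Rabs; destruct (Rcase_abs X); lra. Qed.

Lemma bnd_abs X B : -B <= X <= B -> Rabs X <= B.
Proof. unfold Rabs; destruct (Rcase_abs X); lra. Qed.

Lemma dd_bounds al x rho : 1/4 <= al <= 1 -> x*x <= 1 - rho -> 0 < rho <= 1 ->
  rho/4 <= dd al x <= 1.
Proof. unfold dd; intros. pose proof (pow2_ge_0 x). split; nra. Qed.

Lemma pq_bnd x p q : x*x <= 1 -> -((p*p+q*q)/2) <= x*p*q <= (p*p+q*q)/2.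
Proof.
  intros. pose proof (pow2_ge_0 (p-q)). pose proof (pow2_ge_0 (p+q)).
  assert (Hx : -1 <= x <= 1) by (split; nra).
  assert (Hpq: -((p*p+q*q)/2) <= p*q <= (p*p+q*q)/2) by (split; nra).
  assert (0 <= p*p+q*q) by nra.
  destruct (Rle_dec 0 (p*q)); split; nra.
Qed.

Lemma Q_abs al x p q : 0 <= al <= 1 -> x*x <= 1 ->
  Rabs (Qf al x p q) <= 2*(p*p+q*q).
Proof.
  intros. unfold Qf. apply bnd_abs. pose proof (pq_bnd x p q H0).
  pose proof (pow2_ge_0 p). pose proof (pow2_ge_0 q). split; nra.
Qed.

Lemma Q_low al x p q : 0 <= al <= 1 -> 0 < dd al x ->
  dd al x * (p*p+q*q) / 2 <= Qf al x p q.
Proof.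
  intros. unfold Qf, dd in *.
  assert ((1+al)*(p*p - x*p*q + al*q*q) - (al - x*x/4)*(p*p+q*q)
          = (p - x/2*q)^2 + (-x/2*p + al*q)^2) by field.
  assert (0 <= p*p - x*p*q + al*q*q).
  { assert (p*p - x*p*q + al*q*q = (p - x/2*q)^2 + (al - x*x/4)*(q*q)) by field.
    pose proof (pow2_ge_0 (p - x/2*q)). pose proof (pow2_ge_0 q). nra. }
  pose proof (pow2_ge_0 (p - x/2*q)). pose proof (pow2_ge_0 (-x/2*p + al*q)).
  pose proof (pow2_ge_0 p). pose proof (pow2_ge_0 q).
  nra.
Qed.

Lemma T_abs al x p q : 0 <= al <= 1 -> x*x <= 1 ->
  Rabs (Tf al x p q) <= 2*(p*p+q*q).
Proof.
  intros. unfold Tf. apply bnd_abs. pose proof (pq_bnd x p q H0).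
  replace (q * (x * p / 2 - al * q)) with (x*p*q/2 - al*(q*q)) by field.
  pose proof (pow2_ge_0 p). pose proof (pow2_ge_0 q).
  assert (0 <= q*q) by apply Rle_0_sqr.
  assert (0 <= al*(q*q)) by (apply Rmult_le_pos; lra).
  assert (al*(q*q) <= 1*(q*q)) by (apply Rmult_le_compat_r; lra).
  assert (0 <= p*p) by apply Rle_0_sqr.
  split; lra.
Qed.

Lemma inv_dd_bnd al x rho : 1/4 <= al <= 1 -> x*x <= 1 - rho -> 0 < rho <= 1 ->
  0 < / dd al x <= 4/rho.
Proof.
  intros. pose proof (dd_bounds al x rho H H0 H1). split.
  apply Rinv_0_lt_compat; lra.
  replace (4/rho) with (/ (rho/4)) by (field; lra).
  apply Rinv_le_contravar; lra.
Qed.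

Lemma abs_pos_le X B : 0 <= X <= B -> Rabs X <= B.
Proof. intros. rewrite Rabs_right; lra. Qed.

Lemma Rf_bound al x p q rho : 1/4 <= al <= 1 -> x*x <= 1 - rho -> 0 < rho <= 1 ->
  Rabs (Rf al x p q) <= 25 * (4/rho)^4 * ((p*p+q*q)*(p*p+q*q)).
Proof.
  intros. set (k := 4/rho). assert (Hk : 4 <= k) by (unfold k; apply Rmult_le_reg_r with rho; [lra| field_simplify; lra]).
  pose proof (inv_dd_bnd al x rho H H0 H1) as Hi. fold k in Hi.
  set (r := p*p+q*q). assert (0 <= r) by (unfold r; pose proof (Rle_0_sqr p); pose proof (Rle_0_sqr q); unfold Rsqr in *; lra).
  assert (Hx : x*x <= 1) by lra.
  pose proof (Q_abs al x p q ltac:(lra) Hx) as HQ. pose proof (T_abs al x p q ltac:(lra) Hx) as HT.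
  fold r in HQ, HT.
  unfold Rf. unfold Rdiv. rewrite Rinv_mult.
  set (ia := / dd al x) in *.
  assert (Rabs (Qf al x p q * Tf al x p q * (ia * ia)) <= (2*r*(2*r))*(k*k)).
  { apply abs_mul_le. apply abs_mul_le; auto. apply abs_mul_le; apply abs_pos_le; lra. }
  assert (k*k <= k^4) by (assert (1 <= k*k) by nra; simpl; nra).
  assert (0 <= r*r) by nra.
  nra.
Qed.

Lemma EG_bound al be x P q rho : 1/4 <= al <= 1 -> 1/4 <= be <= 1 -> x*x <= 1 - rho -> 0 < rho <= 1 ->
  Rabs (Ef al be x P q + Gf al be x P q) <= 25 * (4/rho)^4 * ((P*P+q*q)*(P*P+q*q)).
Proof.
  intros. set (k := 4/rho). assert (Hk : 4 <= k) by (unfold k; apply Rmult_le_reg_r with rho; [lra| field_simplify; lra]).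
  pose proof (inv_dd_bnd al x rho H H1 H2) as Ha. pose proof (inv_dd_bnd be x rho H0 H1 H2) as Hb.
  pose proof (dd_bounds al x rho H H1 H2) as Da. pose proof (dd_bounds be x rho H0 H1 H2) as Db.
  fold k in Ha, Hb.
  set (r := P*P+q*q). assert (0 <= r) by (unfold r; pose proof (Rle_0_sqr P); pose proof (Rle_0_sqr q); unfold Rsqr in *; lra).
  assert (Hqq : 0 <= q*q <= r) by (unfold r; pose proof (Rle_0_sqr P); pose proof (Rle_0_sqr q); unfold Rsqr in *; lra).
  assert (Hx : x*x <= 1) by lra.
  pose proof (Q_abs al x P q ltac:(lra) Hx) as HQ. pose proof (T_abs al x P q ltac:(lra) Hx) as HT.
  fold r in HQ, HT.
  assert (k*k <= k^4) by (assert (1 <= k*k) by nra; simpl; nra).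
  assert (k*k*k <= k^4) by (assert (1 <= k*k) by nra; simpl; nra).
  assert (0 <= r*r) by nra.
  assert (HE : Rabs (Ef al be x P q) <= 9 * k^4 * (r*r)).
  { unfold Ef. unfold Rdiv. set (ia := / dd al x) in *. set (ib := / dd be x) in *.
    assert (Rabs (q*q - Qf al x P q * ia) <= 3*r*k).
    { assert (Rabs (Qf al x P q * ia) <= 2*r*k) by (apply abs_mul_le; [exact HQ| apply abs_pos_le; lra]).
      eapply Rle_trans. apply abs_sub_le. apply abs_pos_le; exact Hqq. eauto. nra. }
    assert (Rabs ((q*q - Qf al x P q * ia)^2 * ib) <= (3*r*k*(3*r*k))*k).
    { apply abs_mul_le. simpl. rewrite Rmult_1_r. apply abs_mul_le; auto. apply abs_pos_le; lra. }
    assert (0 <= r*r*k) by (apply Rmult_le_pos; nra).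
    nra. }
  assert (HG : Rabs (Gf al be x P q) <= 13 * k^4 * (r*r)).
  { unfold Gf. unfold Rdiv. set (ia := / dd al x) in *. set (ib := / dd be x) in *.
    replace (/ (dd al x ^ 2 * dd be x ^ 2)) with (ia*ia*(ib*ib)) by (unfold ia, ib; field; lra).
    replace (/ dd be x ^ 2) with (ib*ib) by (unfold ib; field; lra).
    assert (Rabs (- Qf al x P q * Tf al x P q * (dd al x + dd be x) * (ia * ia * (ib * ib))) <= (2*r*(2*r)*2)*(k*k*(k*k))).
    { apply abs_mul_le. apply abs_mul_le. rewrite Ropp_mult_distr_l_reverse, Rabs_Ropp. apply abs_mul_le; auto.
      apply abs_pos_le; lra. apply abs_mul_le; apply abs_mul_le; apply abs_pos_le; lra. }
    assert (Rabs ((q * q * (Tf al x P q - Qf al x P q) - (be - al) * q ^ 4) * (ib * ib)) <= (r*(4*r) + 1*(r*r))*(k*k)).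
    { apply abs_mul_le. apply abs_sub_le. apply abs_mul_le. apply abs_pos_le; lra.
      eapply Rle_trans. apply abs_sub_le; [exact HT | exact HQ]. lra.
      apply abs_mul_le. apply bnd_abs; lra. replace (q^4) with ((q*q)*(q*q)) by ring.
      apply abs_mul_le; apply abs_pos_le; lra.
      apply abs_mul_le; apply abs_pos_le; lra. }
    eapply Rle_trans. apply abs_sum_le; eauto.
    assert (k*k*(k*k) = k^4) by ring. nra. }
  eapply Rle_trans. apply abs_sum_le; eauto. nra.
Qed.

Fixpoint rsum (f : nat -> R) (m N : nat) : R :=
  match N with O => 0 | S N' => rsum f m N' + f (m + N')%nat end.
Definition tt (a : nat -> R) (n : nat) := a n * a n - a (n-1)%nat * a (n-1)%nat.
Definition eps a n := (tt a n)^2 + Rabs (tt a (S n) - tt a n).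

Lemma eps_nonneg a n : 0 <= eps a n.
Proof. unfold eps. pose proof (pow2_ge_0 (tt a n)). pose proof (Rabs_pos (tt a (S n) - tt a n)). lra. Qed.

Lemma rsum_nonneg f m N : (forall n, 0 <= f n) -> 0 <= rsum f m N.
Proof. intros H; induction N; simpl; [lra| pose proof (H (m+N)%nat); lra]. Qed.

Section PI.
Variables (a : nat -> R) (x : R) (u : nat -> R).
Definition pp n := a n * u (S n).
Definition qq n := u n.
Definition al n := a n * a n.
Definition Vn n := Vf (al n) x (pp n) (qq n).
Definition Wn n := Vn n + tt a (S n) * Rf (al n) x (pp n) (qq n).
Definition rn n := pp n * pp n + qq n * qq n.
End PI.

Lemma step_facts a x u n : a n <> 0 ->
  (forall n, (1 <= n)%nat -> a n * u (S n) - x * u n + a (n-1)%nat * u (n-1)%nat = 0) ->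
  qq u (S n) = pp a u n / a n /\ pp a u (S n) = x * (pp a u n / a n) - a n * qq u n.
Proof.
  intros Ha Hr. unfold pp, qq. split. field; auto.
  replace (a n * u (S n) / a n) with (u (S n)) by (field; auto).
  specialize (Hr (S n) ltac:(lia)). replace (S n - 1)%nat with n in Hr by lia.
  lra.
Qed.

Lemma W_step a x u n rho : 0 < rho <= 1 -> x*x <= 1 - rho -> (forall n, 1/2 <= a n <= 1) ->
  (forall n, (1 <= n)%nat -> a n * u (S n) - x * u n + a (n-1)%nat * u (n-1)%nat = 0) ->
  Rabs (Wn a x u (S n) - Wn a x u n) <= eps a (S n) * (25 * (4/rho)^4) * (rn a u (S n) * rn a u (S n)).
Proof.
  intros Hrho Hx Ha Hr.
  assert (Han : a n <> 0) by (specialize (Ha n); lra).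
  destruct (step_facts a x u n Han Hr) as [E1 E2].
  assert (Hal : forall k, 1/4 <= al a k <= 1) by (intro k; unfold al; specialize (Ha k); split; nra).
  pose proof (dd_bounds (al a n) x rho (Hal n) Hx Hrho) as Dn.
  pose proof (dd_bounds (al a (S n)) x rho (Hal (S n)) Hx Hrho) as DSn.
  pose proof (V_step (a n) (al a (S n)) x (pp a u n) (qq u n) Han ltac:(unfold al in *; lra) ltac:(lra)) as VS.
  cbv zeta in VS. rewrite <- E2, <- E1 in VS.
  pose proof (R_step (al a n) (al a (S n)) x (pp a u (S n)) (qq u (S n)) ltac:(lra) ltac:(lra)) as RS.
  assert (Ht : tt a (S n) = al a (S n) - al a n) by (unfold tt, al; replace (S n - 1)%nat with n by lia; ring).
  assert (Heq : Wn a x u (S n) - Wn a x u n =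
     tt a (S n) ^2 * (Ef (al a n) (al a (S n)) x (pp a u (S n)) (qq u (S n)) + Gf (al a n) (al a (S n)) x (pp a u (S n)) (qq u (S n)))
     + (tt a (S (S n)) - tt a (S n)) * Rf (al a (S n)) x (pp a u (S n)) (qq u (S n))).
  { unfold Wn, Vn. rewrite Ht. unfold al in *.
    set (E := Ef (a n * a n) (a (S n) * a (S n)) x (pp a u (S n)) (qq u (S n))) in *.
    set (G := Gf (a n * a n) (a (S n) * a (S n)) x (pp a u (S n)) (qq u (S n))) in *.
    set (R1 := Rf (a n * a n) x (pp a u n) (qq u n)) in *.
    set (R2 := Rf (a n * a n) x (pp a u (S n)) (qq u (S n))) in *.
    set (R3 := Rf (a (S n) * a (S n)) x (pp a u (S n)) (qq u (S n))) in *.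
    set (t := a (S n) * a (S n) - a n * a n) in *.
    set (V1 := Vf (a (S n) * a (S n)) x (pp a u (S n)) (qq u (S n))) in *.
    set (V0 := Vf (a n * a n) x (pp a u n) (qq u n)) in *.
    assert (RS' : R3 = R2 + t * G) by (rewrite <- RS; ring).
    assert (VS' : V1 = V0 + (t * (R1 - R2) + t ^ 2 * E)) by (rewrite <- VS; ring).
    rewrite RS', VS'. ring. }
  rewrite Heq.
  set (r := rn a u (S n)).
  pose proof (EG_bound (al a n) (al a (S n)) x (pp a u (S n)) (qq u (S n)) rho (Hal n) (Hal (S n)) Hx Hrho) as EG.
  pose proof (Rf_bound (al a (S n)) x (pp a u (S n)) (qq u (S n)) rho (Hal (S n)) Hx Hrho) as RB.
  fold r in EG, RB. unfold rn in r. fold r in EG, RB.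
  unfold eps. set (K := 25 * (4/rho)^4) in *.
  eapply Rle_trans. apply abs_sum_le. apply abs_mul_le. apply abs_pos_le. split. apply pow2_ge_0. apply Rle_refl. exact EG.
  apply abs_mul_le. apply Rle_refl. exact RB. lra.
Qed.

Lemma V_bounds al x p q rho : 1/4 <= al <= 1 -> x*x <= 1 - rho -> 0 < rho <= 1 ->
  0 <= Vf al x p q /\
  (p*p+q*q)*(p*p+q*q) <= 4*(4/rho)^2 * Vf al x p q /\
  Vf al x p q <= 4*(4/rho) * ((p*p+q*q)*(p*p+q*q)).
Proof.
  intros Hal Hx Hr. pose proof (dd_bounds al x rho Hal Hx Hr) as D.
  pose proof (inv_dd_bnd al x rho Hal Hx Hr) as I.
  pose proof (Q_low al x p q ltac:(lra) ltac:(lra)) as QL.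
  pose proof (Q_abs al x p q ltac:(lra) ltac:(lra)) as QA.
  set (r := p*p+q*q) in *. set (Q := Qf al x p q) in *.
  assert (0 <= r) by (unfold r; pose proof (Rle_0_sqr p); pose proof (Rle_0_sqr q); unfold Rsqr in *; lra).
  unfold Vf. fold Q. unfold Rdiv. set (i := / dd al x) in *.
  assert (HQ0 : rho/8 * r <= Q) by nra.
  assert (0 <= Q) by nra.
  apply abs_bnd in QA.
  assert (Q*Q <= 4*(r*r)) by nra.
  assert (rho/8*r*(rho/8*r) <= Q*Q) by (apply Rmult_le_compat; nra).
  assert (1 <= i) by (unfold i; rewrite <- Rinv_1; apply Rinv_le_contravar; lra).
  assert (0 <= Q*Q) by nra.
  assert (Q*Q <= Q*Q*i) by nra.
  split; [nra|split].
  - assert (E : 4*(4/rho)^2 * (rho/8*r*(rho/8*r)) = r*r) by (field; lra).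
    rewrite <- E. apply Rmult_le_compat_l. apply Rmult_le_pos; [lra| apply pow2_ge_0]. lra.
  - assert (0 <= Q*Q) by nra. 
    assert (Q*Q*i <= 4*(r*r)*(4/rho)) by (apply Rmult_le_compat; nra). nra.
Qed.

Lemma rn_step a x u n : (forall n, 1/2 <= a n <= 1) -> x*x <= 1 ->
  (forall n, (1 <= n)%nat -> a n * u (S n) - x * u n + a (n-1)%nat * u (n-1)%nat = 0) ->
  rn a u (S n) <= 12 * rn a u n.
Proof.
  intros Ha Hx Hr. assert (Han : a n <> 0) by (specialize (Ha n); lra).
  destruct (step_facts a x u n Han Hr) as [E1 E2]. unfold rn. rewrite E1, E2.
  set (s := pp a u n / a n). assert (pp a u n = a n * s) by (unfold s; field; auto).
  rewrite H. set (q := qq u n). specialize (Ha n). set (an := a n) in *.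
  assert (1/4 <= an*an) by nra.
  assert (0 <= (an*an - 1/4)*(s*s)) by (apply Rmult_le_pos; [lra| pose proof (Rle_0_sqr s); unfold Rsqr in *; lra]).
  assert (s*s <= 4*(an*s*(an*s))) by nra.
  pose proof (Rle_0_sqr (x*s + an*q)). pose proof (Rle_0_sqr q). pose proof (Rle_0_sqr s).
  pose proof (Rle_0_sqr (x*s - an*q)). unfold Rsqr in *.
  assert (x*s*(x*s) <= s*s) by nra.
  assert (0 <= (1 - an*an)*(q*q)) by (apply Rmult_le_pos; nra).
  assert (an*q*(an*q) <= q*q) by nra.
  nra.
Qed.

Lemma W_V a x u n rho : 0 < rho <= 1 -> x*x <= 1 - rho -> (forall n, 1/2 <= a n <= 1) ->
  Rabs (Wn a x u n - Vn a x u n) <= Rabs (tt a (S n)) * (25 * (4/rho)^4) * (rn a u n * rn a u n).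
Proof.
  intros. unfold Wn. replace (Vn a x u n + tt a (S n) * Rf (al a n) x (pp a u n) (qq u n) - Vn a x u n)
    with (tt a (S n) * Rf (al a n) x (pp a u n) (qq u n)) by ring.
  rewrite Rmult_assoc. apply abs_mul_le. lra. apply Rf_bound; auto.
  unfold al; specialize (H1 n); split; nra. 
Qed.

Lemma abs_le_sq y : Rabs y <= 1 + y*y.
Proof. unfold Rabs; destruct (Rcase_abs y); nra. Qed.

Lemma partI (a : nat -> R) (rho : R) : 0 < rho <= 1 -> a 0%nat = 1 -> (forall n, 1/2 <= a n <= 1) ->
  (forall tau, 0 < tau -> exists m, forall N, rsum (eps a) (S m) N <= tau) ->
  exists C, forall x th u, x*x <= 1 - rho -> u 0%nat = cos th -> u 1%nat = sin th ->
   (forall n, (1 <= n)%nat -> a n * u (S n) - x * u n + a (n-1)%nat * u (n-1)%nat = 0) ->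
   forall n, Rabs (u n) <= C.
Proof.
  intros Hrho Ha0 Ha Htail.
  set (K := 25 * (4/rho)^4). set (L := 4*(4/rho)^2).
  assert (Hk : 0 < 4/rho) by (apply Rdiv_lt_0_compat; lra).
  assert (HK : 0 < K) by (unfold K; apply Rmult_lt_0_compat; [lra| apply pow_lt; lra]).
  assert (HL : 0 < L) by (unfold L; apply Rmult_lt_0_compat; [lra| apply pow_lt; lra]).
  set (kap := / (8*K*L)). assert (Hkap : 0 < kap) by (unfold kap; apply Rinv_0_lt_compat; nra).
  assert (HkKL : kap * (K*L) = 1/8) by (unfold kap; field; lra).
  destruct (Htail (Rmin kap (kap*kap))) as [m Hm].
  { apply Rmin_glb_lt; nra. }
  exists (2 + 144^m + 3*L*(4*(4/rho))*144^m).
  intros x th u Hx H0 H1 Hr.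
  assert (Hx1 : x*x <= 1) by lra.
  assert (Hal : forall k, 1/4 <= al a k <= 1) by (intro k; unfold al; specialize (Ha k); split; nra).
  assert (rn0 : rn a u 0 = 1).
  { unfold rn, pp, qq. rewrite Ha0, H0, H1. pose proof (sin2_cos2 th). unfold Rsqr in *. lra. }
  assert (rnnn : forall n, 0 <= rn a u n).
  { intro n. unfold rn. pose proof (Rle_0_sqr (pp a u n)). pose proof (Rle_0_sqr (qq u n)). unfold Rsqr in *. lra. }
  assert (rnpow : forall n, rn a u n <= 12^n).
  { induction n. rewrite pow_O; lra. pose proof (rn_step a x u n Ha Hx1 Hr). rewrite <- tech_pow_Rmult. lra. }
  assert (epsle : forall k, eps a (S (m + k)) <= Rmin kap (kap*kap)).
  { intro k. pose proof (Hm (S k)). simpl in H. pose proof (rsum_nonneg (eps a) (S m) k (eps_nonneg a)).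
    lra. }
  assert (ttle : forall k, Rabs (tt a (S (m + k))) <= kap).
  { intro k. pose proof (epsle k). unfold eps in H. pose proof (Rabs_pos (tt a (S (S (m + k))) - tt a (S (m + k)))).
    pose proof (Rmin_r kap (kap*kap)). 
    assert (tt a (S (m+k)) ^2 <= kap*kap) by lra.
    apply bnd_abs. simpl in H4. split; nra. }
  assert (Vb : forall n, 0 <= Vn a x u n /\ rn a u n * rn a u n <= L * Vn a x u n /\ Vn a x u n <= 4*(4/rho)*(rn a u n * rn a u n)).
  { intro n. apply V_bounds; auto. }
  assert (WVb : forall n, Rabs (Wn a x u n - Vn a x u n) <= Rabs (tt a (S n)) * K * (rn a u n * rn a u n)).
  { intro n. apply W_V; auto. }
  assert (Inv : forall k, Vn a x u (m+k) <= 3 * Vn a x u m /\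
     Wn a x u (m+k) <= Wn a x u m + 3*(K*L)*Vn a x u m * rsum (eps a) (S m) k).
  { induction k.
    - rewrite Nat.add_0_r. simpl. destruct (Vb m). split; lra.
    - destruct IHk as [IH1 IH2].
      replace (m + S k)%nat with (S (m + k)) by lia.
      set (n := (m+k)%nat) in *.
      pose proof (W_step a x u n rho Hrho Hx Ha Hr) as WS. fold K in WS.
      destruct (Vb (S n)) as [V'0 [V'L V'U]].
      destruct (Vb m) as [Vm0 [VmL VmU]].
      pose proof (WVb (S n)) as WV'. pose proof (ttle (S k)) as T'.
      replace (S (m + S k)) with (S (S n)) in T' by (unfold n; lia).
      pose proof (WVb m) as WVm. pose proof (ttle 0%nat) as Tm. rewrite Nat.add_0_r in Tm.
      pose proof (epsle k) as Ek. fold n in Ek.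
      pose proof (Hm (S k)) as Sk1. simpl in Sk1. fold n in Sk1.
      pose proof (rsum_nonneg (eps a) (S m) k (eps_nonneg a)) as Sk0.
      pose proof (eps_nonneg a (S n)) as e0.
      set (Sk := rsum (eps a) (S m) k) in *. set (e := eps a (S n)) in *.
      set (V' := Vn a x u (S n)) in *. set (W' := Wn a x u (S n)) in *.
      set (Vm := Vn a x u m) in *. set (Wm := Wn a x u m) in *.
      set (r' := rn a u (S n)) in *. set (rm := rn a u m) in *.
      set (Wn0 := Wn a x u n) in *.
      pose proof (Rmin_l kap (kap*kap)).
      assert (HSe : Sk + e <= kap) by lra.
      assert (A1 : Rabs (tt a (S (S n))) * K * (r'*r') <= kap * K * (L * V')).
      { apply Rmult_le_compat. apply Rmult_le_pos; [apply Rabs_pos| lra]. nra.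
        apply Rmult_le_compat_r; lra. lra. }
      assert (A2 : Rabs (tt a (S m)) * K * (rm*rm) <= kap * K * (L * Vm)).
      { apply Rmult_le_compat. apply Rmult_le_pos; [apply Rabs_pos| lra]. nra.
        apply Rmult_le_compat_r; lra. lra. }
      assert (A3 : e * K * (r'*r') <= e * K * (L * V')).
      { apply Rmult_le_compat_l. nra. lra. }
      apply abs_bnd in WS. apply abs_bnd in WV'. apply abs_bnd in WVm.
      set (X := K*L*e). set (Y := K*L*Sk).
      assert (X0 : 0 <= X) by (unfold X; nra). assert (Y0 : 0 <= Y) by (unfold Y; nra).
      assert (XY : X + Y <= 1/8).
      { unfold X, Y. replace (K*L*e + K*L*Sk) with ((K*L)*(Sk+e)) by ring.
        rewrite <- HkKL. rewrite Rmult_comm. apply Rmult_le_compat_r; nra. }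
      assert (E1 : kap * K * (L * V') = V'/8) by (replace (kap*K*(L*V')) with (kap*(K*L)*V') by ring; rewrite HkKL; field).
      assert (E2 : kap * K * (L * Vm) = Vm/8) by (replace (kap*K*(L*Vm)) with (kap*(K*L)*Vm) by ring; rewrite HkKL; field).
      assert (E3 : e * K * (L * V') = X * V') by (unfold X; ring).
      assert (E4 : 3*(K*L)*Vm*Sk = 3*Y*Vm) by (unfold Y; ring).
      rewrite E4 in IH2.
      assert (HW' : 7/8*V' <= 9/8*Vm + 3*Y*Vm + X*V') by lra.
      assert (HV' : V' <= 3*Vm).
      { destruct (Rle_dec V' (3*Vm)); auto.
        assert (0 < (7/8 - X)*(V' - 3*Vm)) by (apply Rmult_lt_0_compat; lra).
        assert (0 <= (12/8 - 3*(X+Y))*Vm) by (apply Rmult_le_pos; lra).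
        nra. }
      split; auto.
      simpl. fold Sk. change (eps a (S (m+k))) with e.
      replace (3*(K*L)*Vm*(Sk+e)) with (3*Y*Vm + 3*X*Vm) by (unfold X, Y; ring).
      assert (X*V' <= X*(3*Vm)) by (apply Rmult_le_compat_l; lra).
      lra. }
  intro n.
  eapply Rle_trans. apply abs_le_sq.
  assert (uq : u n * u n <= rn a u n).
  { unfold rn, qq. pose proof (Rle_0_sqr (pp a u n)). unfold Rsqr in *. lra. }
  assert (P144 : forall k, 12^k*12^k = 144^k).
  { intro k. rewrite <- Rpow_mult_distr. f_equal. lra. }
  assert (Hpos : 0 <= 144^m) by (apply pow_le; lra).
  assert (HLk : 0 <= 3*L*(4*(4/rho))*144^m) by (apply Rmult_le_pos; [nra| lra]).
  destruct (Nat.le_gt_cases m n) as [Hmn|Hmn].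
  - destruct (Inv (n - m)%nat) as [I1 _]. replace (m + (n - m))%nat with n in I1 by lia.
    destruct (Vb n) as [Vn0 [VnL VnU]]. destruct (Vb m) as [Vm0 [VmL VmU]].
    pose proof (rnpow m). pose proof (rnnn m). pose proof (rnnn n).
    assert (rn a u m * rn a u m <= 144^m) by (rewrite <- P144; apply Rmult_le_compat; lra).
    assert (rn a u n * rn a u n <= 3*L*(4*(4/rho))*144^m).
    { eapply Rle_trans. exact VnL.
      replace (3*L*(4*(4/rho))*144^m) with (L * (3 * (4*(4/rho)*144^m))) by ring.
      apply Rmult_le_compat_l. lra.
      eapply Rle_trans. exact I1. apply Rmult_le_compat_l. lra. eapply Rle_trans. exact VmU. apply Rmult_le_compat_l; lra. }
    assert (rn a u n <= 1 + rn a u n * rn a u n) by nra.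
    lra.
  - pose proof (rnpow n).
    assert (12^n <= 12^m) by (apply Rle_pow; [lra| lia]).
    assert (12^m <= 144^m) by (apply pow_incr; lra).
    lra.
Qed.

Definition fam_ind (r : R) : Prop := 0 < r < 1.
Definition fam_f (r y : R) : Prop := 0 < r < 1 /\ Rabs y < 1 - r.
Lemma fam_cond : forall r, (exists y, fam_f r y) -> fam_ind r.
Proof. intros r [y [H _]]. exact H. Qed.
Definition fam : family := mkfamily fam_ind fam_f fam_cond.

Fixpoint minl (l : list R) : R := match l with nil => 1 | cons r l' => Rmin r (minl l') end.

Lemma minl_pos l : (forall r, In r l -> 0 < r) -> 0 < minl l.
Proof. induction l; simpl; intros. lra. apply Rmin_glb_lt; auto. Qed.
Lemma minl_le l r : In r l -> minl l <= r.
Proof. induction l; simpl; intros H. contradiction. destruct H. subst. apply Rmin_l.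
  eapply Rle_trans. apply Rmin_r. auto. Qed.
Lemma minl_le1 l : minl l <= 1.
Proof. induction l; simpl. lra. eapply Rle_trans. apply Rmin_r. auto. Qed.

Lemma compact_rho (K : R -> Prop) : compact K -> (forall x, K x -> -1 < x < 1) ->
  exists rho, 0 < rho <= 1 /\ forall x, K x -> x*x <= 1 - rho.
Proof.
  intros HK Hin.
  destruct (HK fam) as [D [Hcov [l Hl]]].
  - split.
    + intros x Hx. exists ((1 - Rabs x)/2). specialize (Hin x Hx).
      assert (Rabs x < 1) by (apply Rabs_def1; lra).
      pose proof (Rabs_pos x). simpl. unfold fam_f. split; [split|]; lra.
    + intros r y Hy. simpl in Hy. unfold fam_f in Hy. destruct Hy as [Hr Hy].
      exists (mkposreal (1 - r - Rabs y) ltac:(lra)). intros z Hz. unfold disc in Hz. simpl in Hz.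
      simpl. unfold fam_f. split; auto.
      pose proof (Rabs_triang (z - y) y) as T.
      replace (z - y + y) with z in T by ring. lra.
  - exists (minl l). 
    assert (Hpos : forall r, In r l -> 0 < r).
    { intros r Hr. apply Hl in Hr. simpl in Hr. unfold intersection_domain in Hr. destruct Hr as [Hr _]. simpl in Hr. unfold fam_ind in Hr. lra. }
    pose proof (minl_pos l Hpos). pose proof (minl_le1 l).
    split. lra.
    intros x Hx. destruct (Hcov x Hx) as [r [Hr HD]]. simpl in Hr. destruct Hr as [Hr Hxr].
    assert (In r l) by (apply Hl; split; auto).
    pose proof (minl_le l r H1).
    assert (Rabs x < 1 - minl l) by lra.
    pose proof (Rabs_pos x).
    assert (x*x = Rabs x * Rabs x) by (rewrite <- Rabs_mult; rewrite Rabs_right; [ring|]; apply Rle_ge; nra).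
    nra.
Qed.

Lemma aux_unfold f j m : a_aux (S f) j m =
    if Nat.ltb m (sizeA j) then 1
    else if Nat.ltb (m - sizeA j) (sizeB j) then
      Rpower 2 (- (INR (S (m - sizeA j)) / INR (j ^ 6)))
    else if Nat.ltb (m - sizeA j - sizeB j) (sizeC j) then 1 / 2
    else if Nat.ltb (m - sizeA j - sizeB j - sizeC j) (sizeD j) then
      Rpower 2 (-1 + INR (S (m - sizeA j - sizeB j - sizeC j)) / INR (j ^ 6))
    else a_aux f (S j) (m - sizeA j - sizeB j - sizeC j - sizeD j).
Proof. reflexivity. Qed.

Lemma peel f j m : a_aux (S f) j (blockLen j + m) = a_aux f (S j) m.
Proof.
  rewrite aux_unfold. unfold blockLen.
  destruct (Nat.ltb_spec (sizeA j + sizeB j + sizeC j + sizeD j + m) (sizeA j)); [lia|].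
  destruct (Nat.ltb_spec (sizeA j + sizeB j + sizeC j + sizeD j + m - sizeA j) (sizeB j)); [lia|].
  destruct (Nat.ltb_spec (sizeA j + sizeB j + sizeC j + sizeD j + m - sizeA j - sizeB j) (sizeC j)); [lia|].
  destruct (Nat.ltb_spec (sizeA j + sizeB j + sizeC j + sizeD j + m - sizeA j - sizeB j - sizeC j) (sizeD j)); [lia|].
  f_equal. lia.
Qed.

Lemma within f j m : (m < blockLen j)%nat -> a_aux (S f) j m = a_aux 1 j m.
Proof.
  intros H. rewrite !aux_unfold. unfold blockLen in H.
  destruct (Nat.ltb_spec m (sizeA j)); auto.
  destruct (Nat.ltb_spec (m - sizeA j) (sizeB j)); auto.
  destruct (Nat.ltb_spec (m - sizeA j - sizeB j) (sizeC j)); auto.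
  destruct (Nat.ltb_spec (m - sizeA j - sizeB j - sizeC j) (sizeD j)); auto. lia.
Qed.

Lemma sizeA_ge j : (1 <= j)%nat -> (3 <= sizeA j)%nat.
Proof. intros. unfold sizeA. assert (1 <= j*j)%nat by nia.
  replace (j*j)%nat with (S (j*j - 1)) by lia. simpl. pose proof (Nat.pow_nonzero 3 (j*j-1)). lia. Qed.
Lemma sizeC_ge j : (1 <= j)%nat -> (2 <= sizeC j)%nat.
Proof. intros. unfold sizeC. assert (1 <= j*j)%nat by nia.
  replace (j*j)%nat with (S (j*j - 1)) by lia. simpl. pose proof (Nat.pow_nonzero 2 (j*j-1)). lia. Qed.
Lemma j6_ge j : (1 <= j)%nat -> (1 <= j^6)%nat.
Proof. intros. pose proof (Nat.pow_nonzero j 6). lia. Qed.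
Lemma blockLen_ge j : (1 <= j)%nat -> (1 <= blockLen j)%nat.
Proof. intros. pose proof (sizeA_ge j H). unfold blockLen. lia. Qed.

Fixpoint hoff (k : nat) : nat := match k with O => O | S k' => (hoff k' + blockLen (S k'))%nat end.

Lemma hoff_ge k : (k <= hoff k)%nat.
Proof. induction k; simpl. lia. pose proof (blockLen_ge (S k) ltac:(lia)). lia. Qed.

Lemma global k : forall m f, (hoff k + m < f)%nat -> a_aux f 1 (hoff k + m) = a_aux (f - k) (S k) m.
Proof.
  induction k; intros m f H.
  - simpl. rewrite Nat.sub_0_r. reflexivity.
  - simpl hoff in *. replace (hoff k + blockLen (S k) + m)%nat with (hoff k + (blockLen (S k) + m))%nat by lia.
    rewrite IHk by lia. pose proof (hoff_ge k).
    replace (f - k)%nat with (S (f - S k)) by lia. apply peel.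
Qed.

Lemma GL k m : (m <= blockLen (S k) + 1)%nat -> a_ex (S (hoff k + m)) = a_aux 1 (S k) m.
Proof.
  intros H. unfold a_ex. rewrite global by lia. pose proof (hoff_ge k).
  destruct (Nat.ltb_spec m (blockLen (S k))).
  - replace (S (hoff k + m) - k)%nat with (S (hoff k + m - k)) by lia. apply within; auto.
  - pose proof (blockLen_ge (S k) ltac:(lia)).
    replace m with (blockLen (S k) + (m - blockLen (S k)))%nat by lia.
    replace (S (hoff k + (blockLen (S k) + (m - blockLen (S k)))) - k)%nat
      with (S (S (hoff k + (blockLen (S k) + (m - blockLen (S k))) - k - 1)))%nat by lia.
    rewrite peel. rewrite aux_unfold.
    pose proof (sizeA_ge (S (S k)) ltac:(lia)).
    destruct (Nat.ltb_spec (m - blockLen (S k)) (sizeA (S (S k)))); [|lia].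
    replace 1%nat with (S 0) by reflexivity. rewrite peel. simpl. reflexivity.
Qed.

Section L.
Variable j : nat.
Hypothesis Hj : (1 <= j)%nat.
Let A := sizeA j. Let B := sizeB j. Let C := sizeC j. Let D := sizeD j.

Lemma loc_A m : (m < A)%nat -> a_aux 1 j m = 1.
Proof. intros. rewrite aux_unfold. destruct (Nat.ltb_spec m (sizeA j)); auto. unfold A in *; lia. Qed.

Lemma loc_B m : (A <= m < A + B)%nat -> a_aux 1 j m = Rpower 2 (- (INR (S (m - A)) / INR (j^6))).
Proof. intros. unfold A, B in *. rewrite aux_unfold. destruct (Nat.ltb_spec m (sizeA j)); [lia|].
  destruct (Nat.ltb_spec (m - sizeA j) (sizeB j)); [auto|lia]. Qed.

Lemma loc_C m : (A + B <= m < A + B + C)%nat -> a_aux 1 j m = 1/2.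
Proof. intros. unfold A, B, C in *. rewrite aux_unfold. destruct (Nat.ltb_spec m (sizeA j)); [lia|].
  destruct (Nat.ltb_spec (m - sizeA j) (sizeB j)); [lia|].
  destruct (Nat.ltb_spec (m - sizeA j - sizeB j) (sizeC j)); [auto|lia]. Qed.

Lemma loc_D m : (A + B + C <= m < A + B + C + D)%nat ->
  a_aux 1 j m = Rpower 2 (-1 + INR (S (m - A - B - C)) / INR (j ^ 6)).
Proof. intros. unfold A, B, C, D in *. rewrite aux_unfold. destruct (Nat.ltb_spec m (sizeA j)); [lia|].
  destruct (Nat.ltb_spec (m - sizeA j) (sizeB j)); [lia|].
  destruct (Nat.ltb_spec (m - sizeA j - sizeB j) (sizeC j)); [lia|].
  destruct (Nat.ltb_spec (m - sizeA j - sizeB j - sizeC j) (sizeD j)); [auto|lia]. Qed.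

Lemma loc_E m : (A + B + C + D <= m)%nat -> a_aux 1 j m = 1.
Proof. intros. unfold A, B, C, D in *. rewrite aux_unfold. destruct (Nat.ltb_spec m (sizeA j)); [lia|].
  destruct (Nat.ltb_spec (m - sizeA j) (sizeB j)); [lia|].
  destruct (Nat.ltb_spec (m - sizeA j - sizeB j) (sizeC j)); [lia|].
  destruct (Nat.ltb_spec (m - sizeA j - sizeB j - sizeC j) (sizeD j)); [lia|]. reflexivity. Qed.

Lemma J6pos : 0 < INR (j^6).
Proof. apply lt_0_INR. pose proof (j6_ge j Hj). lia. Qed.

Lemma B1 : INR B + 1 = INR (j^6).
Proof. unfold B, sizeB. pose proof (j6_ge j Hj). rewrite minus_INR by lia. replace (INR 1) with 1 by reflexivity. lra. Qed.
Lemma D1 : INR D + 1 = INR (j^6).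
Proof. unfold D, sizeD. pose proof (j6_ge j Hj). rewrite minus_INR by lia. replace (INR 1) with 1 by reflexivity. lra. Qed.

Lemma Rp2_0 : Rpower 2 0 = 1.
Proof. apply Rpower_O; lra. Qed.
Lemma Rp2_m1 : Rpower 2 (-1) = 1/2.
Proof. replace (-1) with (- (1)) by ring. rewrite Rpower_Ropp, Rpower_1 by lra. lra. Qed.

Lemma uB m : (A - 1 <= m <= A + B)%nat ->
  a_aux 1 j m = Rpower 2 (-(INR m + 1 - INR A) / INR (j^6)).
Proof.
  intros H. pose proof (sizeA_ge j Hj). fold A in H0. pose proof J6pos.
  destruct (Nat.eq_dec m (A-1)) as [->|].
  { rewrite loc_A by lia. rewrite minus_INR by lia. replace (INR 1) with 1 by reflexivity.
    replace (-(INR A - 1 + 1 - INR A) / INR (j^6)) with 0 by (field; lra). rewrite Rp2_0; auto. }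
  destruct (Nat.eq_dec m (A+B)) as [->|].
  { pose proof (sizeC_ge j Hj) as HC; fold C in HC. rewrite loc_C by lia. rewrite plus_INR.
    replace (-(INR A + INR B + 1 - INR A) / INR (j^6)) with (-1) by (rewrite <- B1; pose proof (pos_INR B); field; lra).
    rewrite Rp2_m1; auto. }
  rewrite loc_B by lia. f_equal. rewrite S_INR, minus_INR by lia. unfold Rdiv. ring.
Qed.

Lemma uD m : (A + B + C - 1 <= m <= A + B + C + D)%nat ->
  a_aux 1 j m = Rpower 2 (-1 + (INR m + 1 - INR (A + B + C)) / INR (j^6)).
Proof.
  intros H. pose proof (sizeC_ge j Hj). fold C in H0. pose proof J6pos.
  destruct (Nat.eq_dec m (A+B+C-1)) as [->|].
  { rewrite loc_C by lia. rewrite minus_INR by lia. replace (INR 1) with 1 by reflexivity.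
    replace (-1 + (INR (A+B+C) - 1 + 1 - INR (A+B+C)) / INR (j^6)) with (-1) by (field; lra). rewrite Rp2_m1; auto. }
  destruct (Nat.eq_dec m (A+B+C+D)) as [->|].
  { rewrite loc_E by lia. rewrite (plus_INR (A+B+C) D).
    replace (-1 + (INR (A+B+C) + INR D + 1 - INR (A+B+C)) / INR (j^6)) with 0 by (rewrite <- D1; pose proof (pos_INR D); field; lra).
    rewrite Rp2_0; auto. }
  rewrite loc_D by lia. f_equal. rewrite S_INR. rewrite !minus_INR by lia. rewrite !plus_INR. unfold Rdiv. ring.
Qed.

End L.

Lemma Rdiv_le_0_compat a b : 0 <= a -> 0 < b -> 0 <= a / b.
Proof. intros. unfold Rdiv. apply Rmult_le_pos; auto. left. apply Rinv_0_lt_compat; auto. Qed.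

Lemma Rp_le1 y : y <= 0 -> Rpower 2 y <= 1.
Proof. intros. unfold Rpower. rewrite <- exp_0. destruct (Req_dec y 0). subst. rewrite Rmult_0_l. lra.
  left. apply exp_increasing. pose proof ln_lt_2. nra. Qed.
Lemma Rp_ge_half y : -1 <= y -> 1/2 <= Rpower 2 y.
Proof. intros. rewrite <- Rp2_m1. unfold Rpower. destruct (Req_dec y (-1)). subst. lra.
  left. apply exp_increasing. pose proof ln_lt_2. nra. Qed.
Lemma Rp_pos y : 0 < Rpower 2 y.
Proof. unfold Rpower. apply exp_pos. Qed.

Lemma aux_bnd f : forall j m, (1 <= j)%nat -> 1/2 <= a_aux f j m <= 1.
Proof.
  induction f; intros j m Hj. simpl; lra.
  rewrite aux_unfold. pose proof (J6pos j Hj).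
  destruct (Nat.ltb_spec m (sizeA j)). lra.
  destruct (Nat.ltb_spec (m - sizeA j) (sizeB j)).
  { set (z := S (m - sizeA j)) in *.
    assert (INR z <= INR (j^6)) by (apply le_INR; unfold z, sizeB in *; lia).
    assert (0 <= INR z) by apply pos_INR.
    assert (INR z / INR (j^6) <= 1) by (apply Rmult_le_reg_r with (INR (j^6)); [lra| field_simplify; lra]).
    assert (0 <= INR z / INR (j^6)) by (apply Rdiv_le_0_compat; lra).
    split. apply Rp_ge_half. lra. apply Rp_le1. lra. }
  destruct (Nat.ltb_spec (m - sizeA j - sizeB j) (sizeC j)). lra.
  destruct (Nat.ltb_spec (m - sizeA j - sizeB j - sizeC j) (sizeD j)).
  { set (z := S (m - sizeA j - sizeB j - sizeC j)) in *.
    assert (INR z <= INR (j^6)) by (apply le_INR; unfold z, sizeD in *; lia).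
    assert (0 <= INR z) by apply pos_INR.
    assert (INR z / INR (j^6) <= 1) by (apply Rmult_le_reg_r with (INR (j^6)); [lra| field_simplify; lra]).
    assert (0 <= INR z / INR (j^6)) by (apply Rdiv_le_0_compat; lra).
    split. apply Rp_ge_half. lra. apply Rp_le1. lra. }
  apply IHf. lia.
Qed.

Definition bl j m := a_aux 1 j m * a_aux 1 j m.
Definition rhoj j := Rpower 2 (-2 / INR (j^6)).
Definition eta j := 1 - rhoj j.
Definition epl j m := (bl j m - bl j (m-1))^2 + Rabs ((bl j (S m) - bl j m) - (bl j m - bl j (m-1))).

Lemma bl_bnd j m : (1 <= j)%nat -> 1/4 <= bl j m <= 1.
Proof. intros. pose proof (aux_bnd 1 j m H). unfold bl. split; nra. Qed.

Lemma rho_bnd j : (1 <= j)%nat -> 0 < rhoj j <= 1.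
Proof. intros. pose proof (J6pos j H). split. apply Rp_pos. apply Rp_le1.
  assert (0 < 2 / INR (j^6)) by (apply Rdiv_lt_0_compat; lra). unfold Rdiv in *. lra. Qed.

Lemma ln2_lt_1 : ln 2 < 1.
Proof. rewrite <- (ln_exp 1). apply ln_increasing. lra.
  pose proof (exp_ineq1 1 ltac:(lra)). lra. Qed.

Lemma eta_bnd j : (1 <= j)%nat -> 0 <= eta j <= 2 / INR (j^6).
Proof.
  intros. pose proof (rho_bnd j H). unfold eta. split. lra.
  pose proof (J6pos j H). unfold rhoj, Rpower.
  pose proof (exp_ineq1_le (-2 / INR (j ^ 6) * ln 2)).
  assert (0 < 2 / INR (j^6)) by (apply Rdiv_lt_0_compat; lra).
  pose proof ln2_lt_1. pose proof ln_lt_2.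
  assert (2 / INR (j^6) * ln 2 <= 2 / INR (j^6)) by nra.
  replace (-2 / INR (j ^ 6) * ln 2) with (- (2 / INR (j^6) * ln 2)) in H3 by (unfold Rdiv; ring).
  lra.
Qed.

Lemma Rp_sq y : Rpower 2 y * Rpower 2 y = Rpower 2 (2*y).
Proof. rewrite <- Rpower_plus. f_equal. ring. Qed.

Section L2.
Variable j : nat.
Hypothesis Hj : (1 <= j)%nat.
Let A := sizeA j. Let B := sizeB j. Let C := sizeC j. Let D := sizeD j.

Lemma geoB m : (A - 1 <= m)%nat -> (S m <= A + B)%nat -> bl j (S m) = bl j m * rhoj j.
Proof.
  intros. unfold bl. rewrite !uB by (auto; unfold A, B in *; lia). rewrite !Rp_sq.
  unfold rhoj. rewrite <- Rpower_plus. f_equal. rewrite S_INR. pose proof (J6pos j Hj). field. lra.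
Qed.

Lemma geoD m : (A + B + C - 1 <= m)%nat -> (S m <= A + B + C + D)%nat -> bl j m = bl j (S m) * rhoj j.
Proof.
  intros. unfold bl. rewrite !uD by (auto; unfold A, B, C, D in *; lia). rewrite !Rp_sq.
  unfold rhoj. rewrite <- Rpower_plus. f_equal. rewrite S_INR. pose proof (J6pos j Hj). field. lra.
Qed.

Lemma bl_one m : ((m < A) \/ (A + B + C + D <= m))%nat -> bl j m = 1.
Proof. intros [H|H]; unfold bl; [rewrite loc_A | rewrite loc_E]; auto; try ring. Qed.

Lemma bl_quarter m : (A + B <= m < A + B + C)%nat -> bl j m = 1/4.
Proof. intros. unfold bl. rewrite loc_C; auto. field. Qed.

Lemma T_bnd m : (1 <= m)%nat -> Rabs (bl j m - bl j (m-1)) <= eta j.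
Proof.
  intros Hm. pose proof (sizeA_ge j Hj) as HA. pose proof (sizeC_ge j Hj) as HC. fold A in HA. fold C in HC.
  pose proof (eta_bnd j Hj). pose proof (rho_bnd j Hj). unfold eta in *.
  set (p := (m-1)%nat). replace m with (S p) by (unfold p; lia).
  pose proof (bl_bnd j p Hj). pose proof (bl_bnd j (S p) Hj).
  destruct (Nat.lt_ge_cases (S p) A).
  { rewrite !bl_one by lia. rewrite Rminus_diag, Rabs_R0. lra. }
  destruct (Nat.le_gt_cases (S p) (A+B)).
  { rewrite geoB by lia. apply bnd_abs. split; nra. }
  destruct (Nat.lt_ge_cases (S p) (A+B+C)).
  { rewrite !bl_quarter by lia. rewrite Rminus_diag, Rabs_R0. lra. }
  destruct (Nat.le_gt_cases (S p) (A+B+C+D)).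
  { rewrite (geoD p) by lia. apply bnd_abs. split; nra. }
  { rewrite !bl_one by lia. rewrite Rminus_diag, Rabs_R0. lra. }
Qed.

Lemma corner m : (1 <= m)%nat -> epl j m <= 3 * eta j.
Proof.
  intros. unfold epl. pose proof (T_bnd m H). pose proof (T_bnd (S m) ltac:(lia)).
  replace (S m - 1)%nat with m in H1 by lia. pose proof (eta_bnd j Hj). pose proof (rho_bnd j Hj).
  assert (eta j <= 1) by (unfold eta; lra).
  apply abs_bnd in H0. apply abs_bnd in H1.
  assert (Rabs (bl j (S m) - bl j m - (bl j m - bl j (m - 1))) <= 2 * eta j) by (apply bnd_abs; split; lra).
  assert ((bl j m - bl j (m - 1))^2 <= eta j) by (simpl; nra).
  lra.
Qed.

Lemma zero1 m : (1 <= m)%nat -> (S m < A)%nat -> epl j m = 0.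
Proof. intros. unfold epl. rewrite !bl_one by lia. rewrite Rminus_diag, Rminus_diag, Rabs_R0. ring. Qed.

Lemma zero2 m : (A + B + 1 <= m)%nat -> (S m < A + B + C)%nat -> epl j m = 0.
Proof. intros. unfold epl. rewrite !bl_quarter by lia. rewrite Rminus_diag, Rminus_diag, Rabs_R0. ring. Qed.

Lemma geo_lemma y0 r : 0 <= y0 <= 1 -> 0 < r <= 1 ->
  (y0*r - y0)^2 + Rabs ((y0*r*r - y0*r) - (y0*r - y0)) <= 2*(1-r)^2 /\
  (y0*r - y0*r*r)^2 + Rabs ((y0 - y0*r) - (y0*r - y0*r*r)) <= 2*(1-r)^2.
Proof.
  intros. replace ((y0*r*r - y0*r) - (y0*r - y0)) with (y0*(1-r)^2) by ring.
  replace ((y0 - y0*r) - (y0*r - y0*r*r)) with (y0*(1-r)^2) by ring.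
  assert (0 <= y0*(1-r)^2) by (apply Rmult_le_pos; [lra| apply pow2_ge_0]).
  rewrite Rabs_right by lra.
  replace ((y0*r - y0)^2) with ((y0*y0)*(1-r)^2) by ring.
  replace ((y0*r - y0*r*r)^2) with ((y0*r*(y0*r))*(1-r)^2) by ring.
  pose proof (pow2_ge_0 (1-r)).
  assert (y0*y0 <= 1) by nra. assert (y0*r*(y0*r) <= 1) by (assert (0 <= y0*r <= 1) by (split; nra); nra).
  assert (y0*(1-r)^2 <= (1-r)^2) by nra.
  split; nra.
Qed.

Lemma geo_epB m : (A <= m)%nat -> (S m <= A + B)%nat -> epl j m <= 2 * (eta j)^2.
Proof.
  intros. unfold epl. pose proof (rho_bnd j Hj). unfold eta.
  pose proof (sizeA_ge j Hj) as HA. fold A in HA.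
  rewrite (geoB m) by lia.
  assert (Hm : bl j m = bl j (m-1) * rhoj j) by (replace m with (S (m-1)) at 1 by lia; apply geoB; lia).
  rewrite Hm.
  pose proof (bl_bnd j (m-1) Hj).
  destruct (geo_lemma (bl j (m-1)) (rhoj j)) as [G _]; try lra.
Qed.

Lemma geo_epD m : (A + B + C <= m)%nat -> (S m <= A + B + C + D)%nat -> epl j m <= 2 * (eta j)^2.
Proof.
  intros. unfold epl. pose proof (rho_bnd j Hj). unfold eta.
  pose proof (sizeA_ge j Hj) as HA. fold A in HA.
  assert (Hm : bl j (m-1) = bl j m * rhoj j) by (replace m with (S (m-1)) at 2 by lia; apply geoD; lia).
  rewrite Hm.
  rewrite (geoD m) by lia.
  pose proof (bl_bnd j (S m) Hj).
  destruct (geo_lemma (bl j (S m)) (rhoj j)) as [_ G]; try lra.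
Qed.

End L2.

Lemma rsum_app f m N1 N2 : rsum f m (N1 + N2) = rsum f m N1 + rsum f (m + N1) N2.
Proof. induction N2; simpl. rewrite Nat.add_0_r; ring. rewrite Nat.add_succ_r. simpl. rewrite IHN2.
  replace (m + N1 + N2)%nat with (m + (N1 + N2))%nat by lia. ring. Qed.

Lemma rsum_le f m N c : (forall i, (i < N)%nat -> f (m+i)%nat <= c) -> rsum f m N <= INR N * c.
Proof. induction N; intros H. simpl; lra. rewrite S_INR. simpl rsum.
  pose proof (H N ltac:(lia)). assert (rsum f m N <= INR N * c) by (apply IHN; intros; apply H; lia). lra. Qed.

Lemma rsum_ext f g m m' N : (forall i, (i < N)%nat -> f (m+i)%nat = g (m'+i)%nat) -> rsum f m N = rsum g m' N.
Proof. induction N; intros H; simpl. auto. rewrite IHN by (intros; apply H; lia). rewrite H by lia. auto. Qed.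

Lemma rsum_mono f m N N' : (forall n, 0 <= f n) -> (N <= N')%nat -> rsum f m N <= rsum f m N'.
Proof. intros. replace N' with (N + (N' - N))%nat by lia. rewrite rsum_app.
  pose proof (rsum_nonneg f (m+N) (N'-N) H). lra. Qed.

Lemma group_sum j : (1 <= j)%nat -> rsum (epl j) 1 (blockLen j) <= 40 / INR (j^6).
Proof.
  intros Hj. pose proof (sizeA_ge j Hj) as HA. pose proof (sizeC_ge j Hj) as HC.
  set (A := sizeA j) in *. set (B := sizeB j). set (C := sizeC j) in *. set (D := sizeD j).
  assert (E : blockLen j = ((A-2) + 1 + B + 1 + (C-2) + 1 + D + 1)%nat) by (unfold blockLen; fold A B C D; lia).
  rewrite E. rewrite !rsum_app.
  pose proof (eta_bnd j Hj) as Het. set (et := eta j) in *.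
  assert (S1 : rsum (epl j) 1 (A-2) <= 0).
  { eapply Rle_trans. apply (rsum_le _ _ _ 0). intros. rewrite zero1; auto; try lra; lia. lra. }
  assert (S2 : forall m, (1 <= m)%nat -> rsum (epl j) m 1 <= 3 * et).
  { intros. simpl. rewrite Nat.add_0_r. pose proof (corner j Hj m H). fold et in H0. lra. }
  assert (S3 : rsum (epl j) (1 + (A - 2 + 1)) B <= INR B * (2 * et^2)).
  { apply rsum_le. intros. apply geo_epB; auto; fold A B; lia. }
  assert (S5 : rsum (epl j) (1 + (A - 2 + 1 + B + 1)) (C - 2) <= 0).
  { eapply Rle_trans. apply (rsum_le _ _ _ 0). intros. rewrite zero2; auto; try lra; fold A B C; lia. lra. }
  assert (S7 : rsum (epl j) (1 + (A - 2 + 1 + B + 1 + (C - 2) + 1)) D <= INR D * (2 * et^2)).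
  { apply rsum_le. intros. apply geo_epD; auto; fold A B C D; lia. }
  pose proof (S2 (1 + (A-2))%nat ltac:(lia)). pose proof (S2 (1 + (A - 2 + 1 + B))%nat ltac:(lia)).
  pose proof (S2 (1 + (A - 2 + 1 + B + 1 + (C - 2)))%nat ltac:(lia)).
  pose proof (S2 (1 + (A - 2 + 1 + B + 1 + (C - 2) + 1 + D))%nat ltac:(lia)).
  pose proof (J6pos j Hj). pose proof (B1 j Hj). pose proof (D1 j Hj). fold B D in H4, H5.
  pose proof (pos_INR B). pose proof (pos_INR D).
  set (J6 := INR (j^6)) in *.
  assert (et*et <= 4/(J6*J6)) by (replace (4/(J6*J6)) with ((2/J6)*(2/J6)) by (field; lra); apply Rmult_le_compat; lra).
  assert (INR B * (2*et^2) <= 8/J6).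
  { replace (8/J6) with (J6 * (2*(4/(J6*J6)))) by (field; lra). simpl. rewrite Rmult_1_r.
    apply Rmult_le_compat; nra. }
  assert (INR D * (2*et^2) <= 8/J6).
  { replace (8/J6) with (J6 * (2*(4/(J6*J6)))) by (field; lra). simpl. rewrite Rmult_1_r.
    apply Rmult_le_compat; nra. }
  assert (12 * et <= 24/J6) by (unfold Rdiv in *; lra).
  unfold Rdiv in *. lra.
Qed.

Lemma eps_loc k m : (1 <= m <= blockLen (S k))%nat -> eps a_ex (S (hoff k) + m) = epl (S k) m.
Proof.
  intros H. replace (S (hoff k) + m)%nat with (S (hoff k + m)) by lia.
  unfold eps, tt, epl, bl.
  replace (S (S (hoff k + m))) with (S (hoff k + S m)) by lia.
  replace (S (hoff k + m) - 1)%nat with (S (hoff k + (m-1))) by lia.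
  replace (S (hoff k + S m) - 1)%nat with (S (hoff k + m)) by lia.
  rewrite (GL k m) by lia. rewrite (GL k (S m)) by lia. rewrite (GL k (m-1)) by lia.
  reflexivity.
Qed.

Lemma epl_nonneg j m : 0 <= epl j m.
Proof. unfold epl. pose proof (pow2_ge_0 (bl j m - bl j (m-1))). pose proof (Rabs_pos (bl j (S m) - bl j m - (bl j m - bl j (m - 1)))). lra. Qed.

Lemma group_eps k N : (N <= blockLen (S k))%nat -> rsum (eps a_ex) (S (S (hoff k))) N <= 40 / INR ((S k)^6).
Proof.
  intros H. rewrite (rsum_ext _ (epl (S k)) _ 1).
  - eapply Rle_trans. apply rsum_mono. apply epl_nonneg. exact H. apply group_sum. lia.
  - intros i Hi. replace (S (S (hoff k)) + i)%nat with (S (hoff k) + (1 + i))%nat by lia.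
    apply eps_loc. lia.
Qed.

Lemma tail_bound N : forall k, rsum (eps a_ex) (S (S (hoff k))) N <= 80 / INR (S k).
Proof.
  induction N as [N IH] using (well_founded_induction Wf_nat.lt_wf). intros k.
  assert (HJ : 1 <= INR (S k)) by (rewrite S_INR; pose proof (pos_INR k); lra).
  set (x := INR (S k)) in *.
  assert (H6 : 40 / INR ((S k)^6) <= 40 / (x*x)).
  { rewrite pow_INR. fold x. apply Rmult_le_compat_l. lra. apply Rinv_le_contravar. nra.
    simpl. assert (1 <= x*x) by nra. assert (1 <= x*x*x*x) by nra. nra. }
  assert (Hx : 40/(x*x) <= 80/x) by (apply Rmult_le_reg_r with (x*x); [nra| field_simplify; nra]).
  destruct (Nat.le_gt_cases N (blockLen (S k))).
  - eapply Rle_trans. apply group_eps; auto. lra.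
  - replace N with (blockLen (S k) + (N - blockLen (S k)))%nat by lia. rewrite rsum_app.
    pose proof (group_eps k (blockLen (S k)) (le_n _)).
    replace (S (S (hoff k)) + blockLen (S k))%nat with (S (S (hoff (S k)))) by (simpl; lia).
    pose proof (blockLen_ge (S k) ltac:(lia)).
    pose proof (IH (N - blockLen (S k))%nat ltac:(lia) (S k)).
    assert (80 / INR (S (S k)) = 80 / (x+1)) by (rewrite S_INR; reflexivity).
    assert (40/(x*x) + 80/(x+1) <= 80/x).
    { apply Rmult_le_reg_r with (x*x*(x+1)). nra. field_simplify; nra. }
    lra.
Qed.

Lemma a_ex_tail : forall tau, 0 < tau -> exists m, forall N, rsum (eps a_ex) (S m) N <= tau.
Proof.
  intros tau Ht. destruct (archimed_cor1 (tau/80) ltac:(lra)) as [n [Hn Hn0]].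
  exists (S (hoff (n-1))). intros N. eapply Rle_trans. apply tail_bound.
  replace (S (n-1)) with n by lia.
  pose proof (lt_0_INR n Hn0).
  apply Rmult_le_reg_r with (/ 80). lra. unfold Rdiv in *. 
  replace (80 * / INR n * / 80) with (/ INR n) by (field; lra). lra.
Qed.

Lemma a_ex_bnd n : 1/2 <= a_ex n <= 1.
Proof. destruct n. simpl. lra. unfold a_ex. apply aux_bnd. lia. Qed.


Theorem theorem5p3 :
  forall K : R -> Prop,
    compact K ->
    (forall x, K x -> -1 < x < 1) ->
    exists C : R,
      forall (x0 theta0 : R) (u : nat -> R),
        K x0 ->
        u 0%nat = cos theta0 ->
        u 1%nat = sin theta0 ->
        (forall n : nat, (1 <= n)%nat ->
           a_ex n * u (S n) - x0 * u n + a_ex (n - 1) * u (n - 1)%nat = 0) ->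
        forall n : nat, Rabs (u n) <= C.
Proof.
  intros K HK Hin. destruct (compact_rho K HK Hin) as [rho [Hr Hx]].
  destruct (partI a_ex rho Hr eq_refl a_ex_bnd a_ex_tail) as [C HC].
  exists C. intros x0 th u Kx H0 H1 Hrec n. apply (HC x0 th u); auto.
Qed.
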